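(* Let $k$ be an infinite field of characteristic $0$, $X_1\subseteq X_2$, $Y_1\subseteq Y_2$ finite sets, $W_i=W(X_i,Y_i)=(L(X_i),A(X_i)Y_i)$ ($i=1,2$), and $H$ a representation. If $(T_1,T_2)$ with $T_1\subseteq L(X_1)$, $T_2\subseteq A(X_1)Y_1$ is $H$-closed in $W_1$, then $(T_1,T_2)=(T_1,T_2)''_{W_2,H}\cap W_1$, i.e. if $(T_1,T_2)''_{W_2,H}=(S_1,S_2)$ then $T_1=S_1\cap L(X_1)$ and $T_2=S_2\cap A(X_1)Y_1$.
   Context: A representation $H=(L,V)$ is a Lie algebra $L$ over $k$ with an $L$-module $V$; homomorphisms $(\varphi,\psi)$: Lie homomorphism $\varphi$, linear $\psi$, $\varphi(l)\circ\psi(v)=\psi(l\circ v)$. $L(X)$ free Lie algebra, $A(X)$ free associative algebra with unit, $A(X)Y$ free $A(X)$-module with basis $Y$; $W_1\subseteq W_2$ naturally. For $W=W(X,Y)$ and $S_1\subseteq L(X)$, $S_2\subseteq A(X)Y$: $(S_1,S_2)'_{W,H}$ is the set of homomorphisms $(\varphi,\psi):W\to H$ with $S_1\subseteq\ker\varphi$, $S_2\subseteq\ker\psi$, $(S_1,S_2)''_{W,H}$ is the pair (intersection of these $\ker\varphi$, intersection of these $\ker\psi$), and $(S_1,S_2)$ is $H$-closed in $W$ if $(S_1,S_2)''_{W,H}=(S_1,S_2)$. *)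

(* Defs.v *)
From HB Require Import structures.
From mathcomp Require Import all_boot all_order all_algebra.
From mathcomp Require Import finmap.
From mathcomp Require Import monalg.

Set Implicit Arguments.
Unset Strict Implicit.
Unset Printing Implicit Defensive.

Import GRing.Theory.
Local Open Scope ring_scope.

Section Defs.
Variable k : fieldType.

Record lie_rep (L V : lmodType k) (br : L -> L -> L) (act : L -> V -> V) : Prop := {
  br_linl : forall c a b d, br (c *: a + b) d = c *: br a d + br b d;
  br_linr : forall c a b d, br d (c *: a + b) = c *: br d a + br d b;
  br_alt  : forall a, br a a = 0;
  br_jacobi : forall a b c, br a (br b c) + br b (br c a) + br c (br a b) = 0;
  act_linl : forall c a b v, act (c *: a + b) v = c *: act a v + act b v;
  act_linr : forall c a u v, act a (c *: u + v) = c *: act a u + act a v;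
  act_br  : forall a b v, act (br a b) v = act a (act b v) - act b (act a v)
}.

Variables (Xt Yt : finType).

(* A = free associative unital algebra on all letters of Xt (noncommutative
   polynomials); A(X) is the subset of polynomials only involving letters in X. *)
Definition FA := {malg k[{fmonom Xt}]}.

Definition inA (X : {set Xt}) (a : FA) : Prop :=
  forall m : {fmonom Xt}, m \in msupp a -> all (fun x => x \in X) (fmonom_val m).

Definition gen (x : Xt) : FA := << fmu x >>.

Definition comm (a b : FA) : FA := a * b - b * a.

(* L(X): the Lie subalgebra of A(X) generated by X (= the free Lie algebra on X). *)
Inductive inL (X : {set Xt}) : FA -> Prop :=
| inL_gen x : x \in X -> inL X (gen x)
| inL_zero : inL X 0
| inL_lin c a b : inL X a -> inL X b -> inL X (c *: a + b)
| inL_comm a b : inL X a -> inL X b -> inL X (comm a b).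

(* A(X)Y: free A(X)-module with basis Y, element sum_y a_y y represented by y |-> a_y *)
Definition FM := {ffun Yt -> FA}.

Definition inM (X : {set Xt}) (Y : {set Yt}) (v : FM) : Prop :=
  forall y, (y \in Y -> inA X (v y)) /\ (y \notin Y -> v y = 0).

Definition lact (l : FA) (v : FM) : FM := [ffun y => l * v y].

Variables (L V : lmodType k) (br : L -> L -> L) (act : L -> V -> V).

(* homomorphisms W(X,Y) -> H; phi and psi only matter on L(X), A(X)Y *)
Definition is_hom (X : {set Xt}) (Y : {set Yt}) (phi : FA -> L) (psi : FM -> V) : Prop :=
  [/\ (forall c a b, inL X a -> inL X b -> phi (c *: a + b) = c *: phi a + phi b),
      (forall a b, inL X a -> inL X b -> phi (comm a b) = br (phi a) (phi b)),
      (forall c u v, inM X Y u -> inM X Y v -> psi (c *: u + v) = c *: psi u + psi v)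
    & (forall l v, inL X l -> inM X Y v -> act (phi l) (psi v) = psi (lact l v))].

Definition prime1 X Y (S1 : FA -> Prop) (S2 : FM -> Prop) phi psi : Prop :=
  is_hom X Y phi psi /\ (forall s, S1 s -> phi s = 0) /\ (forall s, S2 s -> psi s = 0).

Definition dprime_L X Y (S1 : FA -> Prop) (S2 : FM -> Prop) (a : FA) : Prop :=
  inL X a /\ forall phi psi, prime1 X Y S1 S2 phi psi -> phi a = 0.

Definition dprime_M X Y (S1 : FA -> Prop) (S2 : FM -> Prop) (v : FM) : Prop :=
  inM X Y v /\ forall phi psi, prime1 X Y S1 S2 phi psi -> psi v = 0.

Definition H_closed X Y (S1 : FA -> Prop) (S2 : FM -> Prop) : Prop :=
  (forall a, dprime_L X Y S1 S2 a <-> S1 a) /\ (forall v, dprime_M X Y S1 S2 v <-> S2 v).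

End Defs.

(* Main.v *)
Require Import Defs.
From HB Require Import structures.
From mathcomp Require Import all_boot all_order all_algebra.
From mathcomp Require Import finmap monalg.
Set Implicit Arguments.
Unset Strict Implicit.
Unset Printing Implicit Defensive.
Import GRing.Theory.
Local Open Scope ring_scope.

Definition hX (k : fieldType) (Xt : finType) (X : {set Xt}) (m : {fmonom Xt}) : FA k Xt :=
  if all (fun x => x \in X) (fmonom_val m) then << m >> else 0.

Lemma UU (k : fieldType) (Xt : finType) (m1 m2 : {fmonom Xt}) :
  (<< m1 >> : FA k Xt) * << m2 >> = << mmul m1 m2 >>.
Proof. by rewrite malgM_def fgmulUU mulr1. Qed.

Lemma hX_mm (k : fieldType) (Xt : finType) (X : {set Xt}) : mmorphism (@hX k Xt X).
Proof.
split.
- move=> m1 m2; rewrite /hX fmM all_cat.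
  case: (all _ m1); case: (all _ m2) => /=; rewrite ?mulr0 ?mul0r //.
  by rewrite UU.
- by rewrite /hX fm1 /=.
Qed.

HB.instance Definition _ (k : fieldType) (Xt : finType) (X : {set Xt}) :=
  isMultiplicative.Build _ _ (@hX k Xt X) (hX_mm k X).

Lemma hX_comm (k : fieldType) (Xt : finType) (X : {set Xt}) (c : k) (m : {fmonom Xt}) :
  c%:MP * @hX k Xt X m = @hX k Xt X m * c%:MP.
Proof.
rewrite /hX; case: ifP => _; last by rewrite mulr0 mul0r.
by rewrite !malgM_def !fgmulUU mulm1 mul1m mulr1 mul1r.
Qed.

Definition piX (k : fieldType) (Xt : finType) (X : {set Xt}) (a : FA k Xt) : FA k Xt :=
  mmap (@malgC _ k) (@hX k Xt X) a.

Lemma pi_mul (k : fieldType) (Xt : finType) (X : {set Xt}) (a b : FA k Xt) :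
  piX X (a * b) = piX X a * piX X b.
Proof.
have := (@commr_mmap_is_multiplicative _ _ _ (@malgC _ k) (@hX k Xt X)).
case.
- move=> g m m'; exact: hX_comm.
- by move=> H _; apply: H.
Qed.

Lemma gen_lin (R : pzRingType) (V : lmodType R) (I : finType) (P : pred I) (f : V -> V)
  (flin : forall c a b, f (c *: a + b) = c *: f a + f b) c (u v : {ffun I -> V}) :
  [ffun y => if P y then f ((c *: u + v) y) else 0] =
  c *: [ffun y => if P y then f (u y) else 0] + [ffun y => if P y then f (v y) else 0].
Proof.
apply/ffunP => y; rewrite !ffunE.
by case: (P y); rewrite ?flin // scaler0 addr0.
Qed.
Lemma gen_mul (R : pzRingType) (I : finType) (P : pred I) (f : R -> R)
  (fm : forall a b, f (a * b) = f a * f b) l (v : {ffun I -> R}) :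
  [ffun y => if P y then f ([ffun y => l * v y] y) else 0] =
  [ffun y => f l * [ffun y => if P y then f (v y) else 0] y].
Proof.
apply/ffunP => y; rewrite !ffunE.
by case: (P y); rewrite ?fm // mulr0.
Qed.
Section Pi.
Lemma FE_unused (k : fieldType) (Xt Yt : finType) (g : Yt -> FA k Xt) y :
  ([ffun y => g y] : FM k Xt Yt) y = g y.
Proof. exact: ffunE. Qed.
Lemma FMD (k : fieldType) (Xt Yt : finType) (u v : FM k Xt Yt) y : (u + v) y = u y + v y.
Proof. exact: ffunE. Qed.
Lemma FMZ (k : fieldType) (Xt Yt : finType) c (u : FM k Xt Yt) y : (c *: u) y = c *: u y.
Proof. exact: ffunE. Qed.
Variables (k : fieldType) (Xt Yt : finType).
Implicit Types (X : {set Xt}) (Y : {set Yt}) (a b : FA k Xt).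

Lemma pi_lin X c a b : piX X (c *: a + b) = c *: piX X a + piX X b.
Proof. by rewrite /piX mmapD mmapZ /= mul_malgC. Qed.

Lemma pi_gen X x : piX X (gen k x) = if x \in X then gen k x else 0.
Proof.
rewrite /piX /gen mmapU /hX fmU /= andbT mpolyC1E mul1r.
by case: (x \in X).
Qed.

Lemma pi_comm X a b : piX X (comm a b) = comm (piX X a) (piX X b).
Proof. by rewrite /comm /piX mmapB -!/(piX _ _) !pi_mul. Qed.

Lemma inA0 X : inA X (0 : FA k Xt).
Proof. by move=> m; rewrite msupp0. Qed.

Lemma inAD X a b : inA X a -> inA X b -> inA X (a + b).
Proof.
move=> Ha Hb m /(fsubsetP (msuppD_le _ _)); rewrite in_fsetU => /orP [] ?.
  exact: Ha.
exact: Hb.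
Qed.

Lemma inAU X c (m : {fmonom Xt}) : all (fun x => x \in X) (fmonom_val m) ->
  inA X (<< c *g m >> : FA k Xt).
Proof. by move=> Hm m' /(fsubsetP msuppU_le); rewrite inE => /eqP ->. Qed.

Lemma inA_pi X a : inA X (piX X a).
Proof.
rewrite /piX mmapE; apply: (big_ind (inA X)); [exact: inA0| exact: inAD|].
move=> m _; rewrite /hX; case: ifP => H; last by rewrite mulr0; exact: inA0.
by rewrite malgM_def fgmulUU mulr1 mul1m; apply: inAU.
Qed.

Lemma pi_id X a : inA X a -> piX X a = a.
Proof.
move=> Ha; rewrite /piX mmapE [RHS]monalgE big_seq [RHS]big_seq.
apply: eq_bigr => m Hm; rewrite /hX (Ha m Hm).
by rewrite malgM_def fgmulUU mulr1 mul1m.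
Qed.

Lemma inL_mono X1 X2 a : X1 \subset X2 -> inL X1 a -> inL X2 a.
Proof.
move=> s; elim => [x Hx| |c a' b' _ Ha _ Hb| a' b' _ Ha _ Hb].
- by apply: inL_gen; apply: (subsetP s).
- exact: inL_zero.
- exact: inL_lin.
- exact: inL_comm.
Qed.

Lemma inL_pi X1 X2 a : inL X2 a -> inL X1 (piX X1 a).
Proof.
elim => [x Hx| |c a' b' _ Ha _ Hb| a' b' _ Ha _ Hb].
- by rewrite pi_gen; case: ifP => H; [apply: inL_gen|apply: inL_zero].
- by rewrite /piX mmap0; exact: inL_zero.
- by rewrite pi_lin; exact: inL_lin.
- by rewrite pi_comm; exact: inL_comm.
Qed.

Lemma pi_idL X a : inL X a -> piX X a = a.
Proof.
elim => [x Hx| |c a' b' _ Ha _ Hb| a' b' _ Ha _ Hb].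
- by rewrite pi_gen Hx.
- by rewrite /piX mmap0.
- by rewrite pi_lin Ha Hb.
- by rewrite pi_comm Ha Hb.
Qed.

Definition piM_def X Y (v : FM k Xt Yt) : FM k Xt Yt :=
  [ffun y => if y \in Y then piX X (v y) else 0].
Fact piM_key : unit. Proof. exact: tt. Qed.
Definition piM := locked_with piM_key piM_def.
Canonical piM_unlockable := [unlockable of piM].

Lemma piME X Y v y : piM X Y v y = if y \in Y then piX X (v y) else 0.
Proof. by rewrite /piM unlock /piM_def ffunE. Qed.

Lemma inM_piM X Y v : inM X Y (piM X Y v).
Proof.
move=> y; rewrite piME; split => [->|/negbTE ->] //; exact: inA_pi.
Qed.

Lemma piM_id X Y v : inM X Y v -> piM X Y v = v.
Proof.
move=> Hv; apply/ffunP => y; rewrite piME.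
case: ifP => Hy; first by rewrite pi_id //; apply: (Hv y).1; rewrite Hy.
by rewrite (Hv y).2 // Hy.
Qed.

Lemma piM_lin X Y c (u v : FM k Xt Yt) :
  piM X Y (c *: u + v) = c *: piM X Y u + piM X Y v.
Proof. rewrite unlock /piM_def; apply: gen_lin; exact: pi_lin. Qed.

Lemma piM_lact X Y l (v : FM k Xt Yt) :
  piM X Y (lact l v) = lact (piX X l) (piM X Y v).
Proof. rewrite /lact unlock /piM_def; apply: gen_mul => a b; exact: pi_mul. Qed.

Lemma inA_mono X1 X2 a : X1 \subset X2 -> inA X1 a -> inA X2 a.
Proof.
move=> s Ha m Hm; apply/allP => x Hx; apply: (subsetP s).
exact: (allP (Ha m Hm)).
Qed.

Lemma inM_mono X1 X2 Y1 Y2 (v : FM k Xt Yt) : X1 \subset X2 -> Y1 \subset Y2 ->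
  inM X1 Y1 v -> inM X2 Y2 v.
Proof.
move=> sX sY Hv y; split => Hy.
- case: (boolP (y \in Y1)) => H1; first by apply: inA_mono sX _; apply: (Hv y).1.
  rewrite (Hv y).2 //; exact: inA0.
- apply: (Hv y).2; apply: contra Hy; exact: (subsetP sY).
Qed.
End Pi.

Theorem proposition3 (k : fieldType)
  (char0 : [pchar k] =i pred0)
  (k_infinite : ~ exists s : seq k, forall x : k, x \in s)
  (Xt Yt : finType) (X1 X2 : {set Xt}) (Y1 Y2 : {set Yt})
  (sX : X1 \subset X2) (sY : Y1 \subset Y2)
  (L V : lmodType k) (br : L -> L -> L) (act : L -> V -> V)
  (HH : lie_rep br act)
  (T1 : FA k Xt -> Prop) (T2 : FM k Xt Yt -> Prop)
  (sT1 : forall a, T1 a -> inL X1 a)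
  (sT2 : forall v, T2 v -> inM X1 Y1 v)
  (closed1 : H_closed br act X1 Y1 T1 T2) :
  (forall a, T1 a <-> (dprime_L br act X2 Y2 T1 T2 a /\ inL X1 a)) /\
  (forall v, T2 v <-> (dprime_M br act X2 Y2 T1 T2 v /\ inM X1 Y1 v)).
Proof.
split.
- move=> a; split.
  + move=> Ta; split; last exact: sT1.
    split; first exact: inL_mono sX (sT1 _ Ta).
    by move=> phi psi [_ [H1 _]]; apply: H1.
  + move=> [[_ Hd] HL]; apply/(closed1.1 a).1; split => //.
    move=> phi psi [[h1 h2 h3 h4] [k1 k2]].
    rewrite -(pi_idL HL).
    apply: (Hd (fun a => phi (piX X1 a)) (fun v => psi (piM X1 Y1 v))).
    split; first split.
    * move=> c a' b' Ha Hb /=; rewrite pi_lin; exact: (h1 c _ _ (inL_pi X1 Ha) (inL_pi X1 Hb)).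
    * move=> a' b' Ha Hb /=; rewrite pi_comm; exact: (h2 _ _ (inL_pi X1 Ha) (inL_pi X1 Hb)).
    * move=> c u v _ _ /=; rewrite piM_lin; exact: (h3 c _ _ (inM_piM X1 Y1 u) (inM_piM X1 Y1 _)).
    * move=> l v Hl _ /=; rewrite piM_lact; exact: (h4 _ _ (inL_pi X1 Hl) (inM_piM X1 Y1 _)).
    split.
    * by move=> s Ts; rewrite pi_idL; [exact: k1| exact: sT1].
    * by move=> s Ts; rewrite piM_id; [exact: k2| exact: sT2].
- move=> v; split.
  + move=> Tv; split; last exact: sT2.
    split; first exact: inM_mono sX sY (sT2 _ Tv).
    by move=> phi psi [_ [_ H2]]; apply: H2.
  + move=> [[_ Hd] HM]; apply/(closed1.2 v).1; split => //.
    move=> phi psi [[h1 h2 h3 h4] [k1 k2]].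
    rewrite -(piM_id HM).
    apply: (Hd (fun a => phi (piX X1 a)) (fun v => psi (piM X1 Y1 v))).
    split; first split.
    * move=> c a' b' Ha Hb /=; rewrite pi_lin; exact: (h1 c _ _ (inL_pi X1 Ha) (inL_pi X1 Hb)).
    * move=> a' b' Ha Hb /=; rewrite pi_comm; exact: (h2 _ _ (inL_pi X1 Ha) (inL_pi X1 Hb)).
    * move=> c u w _ _ /=; rewrite piM_lin; exact: (h3 c _ _ (inM_piM X1 Y1 u) (inM_piM X1 Y1 _)).
    * move=> l w Hl _ /=; rewrite piM_lact; exact: (h4 _ _ (inL_pi X1 Hl) (inM_piM X1 Y1 _)).
    split.
    * by move=> s Ts; rewrite pi_idL; [exact: k1| exact: sT1].
    * by move=> s Ts; rewrite piM_id; [exact: k2| exact: sT2].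
Qed.
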